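(* For every integer $k\ge 3$ there exists a $K_3$-WORM-colorable graph $F_k$ such that $W^-(F_k,K_3)=k$.
   Context: A $K_3$-WORM coloring of a graph $G$ is an assignment of colors to the vertices of $G$ such that the three vertices of every triangle ($K_3$-subgraph) of $G$ receive exactly two distinct colors (no triangle is monochromatic or rainbow). $G$ is $K_3$-WORM-colorable if it has such a coloring, and then $W^-(G,K_3)$ is the minimum number of colors used in a $K_3$-WORM coloring of $G$. *)

(* Defs.v *)
From mathcomp Require Import all_boot.
Set Implicit Arguments. Unset Strict Implicit. Unset Printing Implicit Defensive.

Definition simple_graph (V : finType) (e : rel V) : Prop :=
  symmetric e /\ irreflexive e.

Definition triangle (V : finType) (e : rel V) (x y z : V) : bool :=
  [&& e x y, e y z & e x z].

Definition K3_worm_coloring (V : finType) (e : rel V) (c : V -> nat) : Prop :=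
  forall x y z : V, triangle e x y z -> size (undup [:: c x; c y; c z]) = 2.

Definition K3_worm_colorable (V : finType) (e : rel V) : Prop :=
  exists c : V -> nat, K3_worm_coloring e c.

Definition num_colors (V : finType) (c : V -> nat) : nat := size (undup [seq c x | x <- enum V]).

Definition lower_worm_number_is (V : finType) (e : rel V) (k : nat) : Prop :=
  (exists c : V -> nat, K3_worm_coloring e c /\ num_colors c = k) /\
  (forall c : V -> nat, K3_worm_coloring e c -> k <= num_colors c).

(* Main.v *)
Require Import Defs.
From mathcomp Require Import all_boot.
From mathcomp Require Import zify.
Set Implicit Arguments. Unset Strict Implicit. Unset Printing Implicit Defensive.
Definition Dedges : seq (nat * nat) :=
  [:: (2,3);(2,4);(2,5);(0,3);(0,4);(0,5);(3,4);(3,5);(4,5);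
      (6,7);(6,8);(6,9);(0,7);(0,8);(0,9);(7,8);(7,9);(8,9);
      (2,6);(2,1);(6,1)].
Definition dn (u v : nat) : bool := ((u, v) \in Dedges) || ((v, u) \in Dedges).
Definition pn (u : nat) : bool := u \in [:: 1; 3; 4; 7; 8].
Lemma D_check_n : all (fun u => all (fun v => all (fun w =>
   (dn u v && dn v w && dn u w) ==> (size (undup [:: pn u; pn v; pn w]) == 2))
   (iota 0 10)) (iota 0 10)) (iota 0 10).
Proof. by vm_compute. Qed.
Lemma D_check (u v w : nat) : u < 10 -> v < 10 -> w < 10 -> dn u v -> dn v w -> dn u w ->
  size (undup [:: pn u; pn v; pn w]) = 2.
Proof.
move=> hu hv hw h1 h2 h3; have /allP/(_ u) := D_check_n.
rewrite mem_iota hu => /(_ isT) /allP/(_ v); rewrite mem_iota hv => /(_ isT).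
move/allP/(_ w); rewrite mem_iota hw => /(_ isT).
by rewrite h1 h2 h3 /= => /eqP.
Qed.
Lemma dn_irr_n : all (fun n => ~~ dn n n) (iota 0 10).
Proof. by vm_compute. Qed.

Lemma w3 (a b c : nat) : size (undup [:: a; b; c]) = 2 ->
  (a = b /\ b <> c) \/ (b = c /\ a <> b) \/ (a = c /\ a <> b).
Proof.
rewrite /= !inE.
case: (eqVneq a b) => ab; case: (eqVneq a c) => ac; case: (eqVneq b c) => bc;
  rewrite ?ab ?ac ?bc /= ?inE ?eqxx ?(negbTE ab) ?(negbTE ac) ?(negbTE bc) ?orbT //=;
  try (move/eqP: ab); try (move/eqP: ac); try (move/eqP: bc); try lia.
Qed.
Lemma eqgad (p x a b c : nat) :
  size (undup [:: a; b; c]) = 2 ->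
  size (undup [:: p; a; b]) = 2 -> size (undup [:: p; a; c]) = 2 -> size (undup [:: p; b; c]) = 2 ->
  size (undup [:: x; a; b]) = 2 -> size (undup [:: x; a; c]) = 2 -> size (undup [:: x; b; c]) = 2 ->
  p = x.
Proof.
move=> /w3 H1 /w3 H2 /w3 H3 /w3 H4 /w3 H5 /w3 H6 /w3 H7.
lia.
Qed.

Section G.
Variable k : nat.
Definition V : finType := ('I_k + ('I_k * 'I_k * 'I_8))%type.
Definition psi (ij : 'I_k * 'I_k) (x : V) : nat :=
  match x with inl a => if a == ij.1 then 0 else 1 | inr (_, t) => t + 2 end.
Definition inC (ij : 'I_k * 'I_k) (x : V) : bool :=
  match x with inl a => (a == ij.1) || (a == ij.2) | inr (ij', _) => ij == ij' end.
Definition e : rel V := fun x y =>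
  [exists ij : 'I_k * 'I_k, [&& ij.1 != ij.2, inC ij x, inC ij y & dn (psi ij x) (psi ij y)]].
Definition col (x : V) : nat :=
  match x with inl a => val a | inr (ij, t) => if pn (t + 2) then val ij.2 else val ij.1 end.

Lemma psi_lt ij x : psi ij x < 10.
Proof. case: x => [a|[ij' t]] /=; first by case: ifP. by have := ltn_ord t; lia. Qed.

Lemma e_sym : symmetric e.
Proof.
move=> x y; apply: eq_existsb => ij.
by rewrite /dn orbC; case: (_ != _); case: (inC ij x); case: (inC ij y).
Qed.

Lemma e_irr : irreflexive e.
Proof.
move=> x; apply/existsP => -[ij /and4P [_ _ _]].
have /allP/(_ (psi ij x)) := dn_irr_n; rewrite mem_iota psi_lt => /(_ isT).
by move/negbTE => ->.
Qed.

Lemma dn_ll ij a b : dn (psi ij (inl a)) (psi ij (inl b)) = false.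
Proof. by rewrite /=; case: (_ == _); case: (_ == _). Qed.

Lemma colE ij x : ij.1 != ij.2 -> inC ij x -> col x = if pn (psi ij x) then val ij.2 else val ij.1.
Proof.
case: x => [a|[ij' t]] /= ne.
  case: (eqVneq a ij.1) => [->|ne1] //.
  by move=> /eqP ->.
by move/eqP=> ->.
Qed.

Lemma inj2 (i j : nat) (b1 b2 b3 : bool) : i != j ->
  size (undup [:: (if b1 then j else i); (if b2 then j else i); (if b3 then j else i)])
  = size (undup [:: b1; b2; b3]).
Proof.
move=> ne; have ne' : j != i by rewrite eq_sym.
by case: b1; case: b2; case: b3; rewrite /= ?inE ?eqxx ?(negbTE ne) ?(negbTE ne').
Qed.

Lemma worm_copy ij x y z : ij.1 != ij.2 -> inC ij x -> inC ij y -> inC ij z ->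
  dn (psi ij x) (psi ij y) -> dn (psi ij y) (psi ij z) -> dn (psi ij x) (psi ij z) ->
  size (undup [:: col x; col y; col z]) = 2.
Proof.
move=> ne cx cy cz h1 h2 h3.
rewrite (colE ne cx) (colE ne cy) (colE ne cz) inj2; last by [].
by apply: D_check; rewrite ?psi_lt.
Qed.


Lemma col_worm x y z : [&& e x y, e y z & e x z] -> size (undup [:: col x; col y; col z]) = 2.
Proof.
case/and3P => /existsP [ij1 /and4P [n1 x1 y1 d1]] /existsP [ij2 /and4P [n2 y2 z2 d2]]
  /existsP [ij3 /and4P [n3 x3 z3 d3]].
case: x x1 d1 x3 d3 => [a|[ijx t]] x1 d1 x3 d3;
case: y y1 d1 y2 d2 => [b|[ijy s]] y1 d1 y2 d2;
case: z z2 d2 z3 d3 => [c|[ijz r]] z2 d2 z3 d3;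
  rewrite ?dn_ll // in d1 d2 d3;
  repeat match goal with
  | H : is_true (inC ?ij (inr _)) |- _ => move/eqP: H => H; subst ij
  end; apply: (worm_copy n1) => //=; by rewrite eqxx.
Qed.

Definition phi (i j : 'I_k) (u : nat) : V :=
  if u == 0 then inl i else if u == 1 then inl j else inr ((i, j), inord (u - 2)).

Lemma phi_ok i j u : i != j -> u < 10 -> inC (i, j) (phi i j u) /\ psi (i, j) (phi i j u) = u.
Proof.
move=> ne hu; rewrite /phi; case: eqP => [->|u0] /=; first by rewrite !eqxx.
case: eqP => [->|u1] /=.
  by rewrite eq_sym (negbTE ne) eqxx orbT.
split; first by rewrite eqxx.
rewrite inordK; lia.
Qed.

Lemma edge_phi i j u v : i != j -> u < 10 -> v < 10 -> dn u v -> e (phi i j u) (phi i j v).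
Proof.
move=> ne hu hv d; apply/existsP; exists (i, j).
have [cu pu] := phi_ok ne hu; have [cv pv] := phi_ok ne hv.
by rewrite ne cu cv pu pv d.
Qed.

Lemma forced (c : V -> nat) : K3_worm_coloring e c ->
  forall i j : 'I_k, i != j -> c (inl i) != c (inl j).
Proof.
move=> Hc i j ne.
have T : forall u v w, u < 10 -> v < 10 -> w < 10 -> dn u v -> dn v w -> dn u w ->
   size (undup [:: c (phi i j u); c (phi i j v); c (phi i j w)]) = 2.
  move=> u v w hu hv hw d1 d2 d3; apply: Hc.
  by rewrite /triangle !edge_phi.
have E1 : c (phi i j 2) = c (phi i j 0).
  by apply: eqgad (c (phi i j 3)) (c (phi i j 4)) (c (phi i j 5)) _ _ _ _ _ _ _; apply: T.
have E2 : c (phi i j 6) = c (phi i j 0).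
  by apply: eqgad (c (phi i j 7)) (c (phi i j 8)) (c (phi i j 9)) _ _ _ _ _ _ _; apply: T.
have := T 2 6 1 erefl erefl erefl erefl erefl erefl.
rewrite E1 E2 /= !inE eqxx /=.
rewrite /phi /=; by case: eqP => // /eqP.
Qed.

Lemma lower (c : V -> nat) : K3_worm_coloring e c -> k <= num_colors c.
Proof.
move=> Hc; rewrite /num_colors.
have <- : size [seq c (inl a) | a <- enum 'I_k] = k by rewrite size_map size_enum_ord.
apply: uniq_leq_size.
  rewrite map_inj_uniq ?enum_uniq // => a b Eab.
  case: (eqVneq a b) => // ne; by move: (forced Hc ne); rewrite Eab eqxx.
move=> x /mapP [a _ ->]; rewrite mem_undup; apply: map_f; exact: mem_enum.
Qed.

Lemma col_lt x : col x < k.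
Proof. case: x => [a|[ij t]] /=; first exact: ltn_ord. by case: ifP. Qed.

Lemma upper : num_colors col <= k.
Proof.
rewrite /num_colors -(size_iota 0 k); apply: uniq_leq_size; first exact: undup_uniq.
move=> x; rewrite mem_undup => /mapP [v _ ->]; by rewrite mem_iota col_lt.
Qed.

End G.

Theorem mainTheorem3 :
  forall k : nat, 3 <= k ->
  exists (V : finType) (e : rel V),
    simple_graph e /\ K3_worm_colorable e /\ lower_worm_number_is e k.
Proof.
move=> k _; exists (V k), (@e k).
have W : K3_worm_coloring (@e k) (@col k) by move=> x y z; exact: col_worm.
split; first by split; [exact: e_sym | exact: e_irr].
split; first by exists (@col k).
split; last exact: lower.
exists (@col k); split=> //; apply/eqP; rewrite eqn_leq upper; exact: lower.
Qed.
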